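(* Let $n\geq 4$. Then there are exactly $8$ $F_n$-good matrices, and under matrix multiplication over $\mathbb{Z}_2$ they form a group isomorphic to the dihedral group $D_4$ of order $8$. For $n=3$, there are exactly $6$ $F_3$-good matrices, and under matrix multiplication they form a group isomorphic to the symmetric group $\mathfrak{S}_3$.
   Context: For $n\geq 1$, the Fibonacci cube $F_n$ is identified with the set of vectors $\vec{x}=(x_1,\ldots,x_n)\in\mathbb{Z}_2^n$ having no two adjacent ones, i.e. there is no $i$ with $1\leq i\leq n-1$ and $x_i=x_{i+1}=1$. An $n\times n$ matrix $A$ with entries in $\mathbb{Z}_2$ is called $F_n$-good if $A$ is invertible over $\mathbb{Z}_2$ and $A\vec{x}\in F_n$ for every $\vec{x}\in F_n$ (such matrices are the ''linear permutations'' of $F_n$). *)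

(* Defs.v *)
From HB Require Import structures.
From mathcomp Require Import all_boot all_order all_algebra all_fingroup all_solvable.
Set Implicit Arguments. Unset Strict Implicit. Unset Printing Implicit Defensive.
Import GRing.Theory.
Local Open Scope ring_scope.

(* Vectors of Z_2^n are column vectors 'cV['F_2]_n; coordinate i is x i 0. *)

(* x is a vertex of the Fibonacci cube F_n: no two adjacent ones,
   i.e. no i with x_i = x_{i+1} = 1. *)
Definition fib_vec (n : nat) (x : 'cV['F_2]_n) : bool :=
  [forall i : 'I_n, forall j : 'I_n,
     (nat_of_ord j == (nat_of_ord i).+1)%N ==> ~~ ((x i 0 == 1) && (x j 0 == 1))].

Definition Fgood (n : nat) (A : 'M['F_2]_n) : bool :=
  (A \in unitmx) && [forall x : 'cV['F_2]_n, fib_vec x ==> fib_vec (A *m x)].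

(* Main.v *)
Require Import Defs.
From HB Require Import structures.
From mathcomp Require Import all_boot all_order all_algebra all_fingroup all_solvable.
Import GRing.Theory.
From mathcomp Require Import zify.

Module Dev1.
Set Implicit Arguments. Unset Strict Implicit. Unset Printing Implicit Defensive.
Local Open Scope nat_scope.
Definition adjn (x y : nat) := (x.+1 == y) || (y.+1 == x).

Definition sp (N : nat) (c d : bool) (i j : nat) : bool :=
  [|| i == j, c && (i == 0) && (j == 2) | d && (i == N) && (j == N - 2)].

Lemma adjnP x y : adjn x y -> x.+1 = y \/ y.+1 = x.
Proof. by case/orP => /eqP H; [left|right]. Qed.

Ltac adj_lia := repeat match goal with H : is_true (adjn _ _) |- _ => case/adjnP: H => H end; lia.

Section Comb.
Variable N : nat.
Variable a : nat -> nat -> bool.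
Hypothesis HB : forall i j, a i j -> i <= N /\ j <= N.
Hypothesis HK : forall i x y, a i x -> a i.+1 y -> adjn x y.
Hypothesis HR : forall i, i <= N -> exists j, a i j.
Hypothesis HC : forall j, j <= N -> exists i, a i j.
Hypothesis HD : forall i i', i < i' -> i' <= N -> exists j, a i j != a i' j.

Lemma rows_eq_false i i' : i < i' -> i' <= N -> (forall j, a i j = a i' j) -> False.
Proof. move=> H1 H2 H; case: (HD H1 H2) => j; by rewrite H eqxx. Qed.

Lemma row_single i p : a i p -> (forall j, a i j -> j = p) -> forall j, a i j = (j == p).
Proof.
move=> Hp H j; apply/idP/idP => [/H -> // | /eqP -> //].
Qed.

Lemma single i x x' : 1 <= i -> i < N -> a i x -> a i x' -> x = x'.
Proof.
move=> H1 H2 Hx Hx'; case: (eqVneq x x') => // /eqP Hne; exfalso.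
case: (HR (i := i.-1) ltac:(lia)) => y Hy.
case: (HR (i := i.+1) ltac:(lia)) => z Hz.
have Ei : i.-1.+1 = i by lia.
have Kyx := HK Hy (eq_ind_r (fun k => a k x) Hx Ei).
have Kyx' := HK Hy (eq_ind_r (fun k => a k x') Hx' Ei).
have Kxz := HK Hx Hz. have Kx'z := HK Hx' Hz.
have Ez : z = y by clear -Kyx Kyx' Kxz Kx'z Hne; adj_lia.
have R1 : forall j, a i.-1 j = (j == y).
  apply: row_single => // w Hw.
  have K1 := HK Hw (eq_ind_r (fun k => a k x) Hx Ei).
  have K2 := HK Hw (eq_ind_r (fun k => a k x') Hx' Ei).
  clear -Kyx Kyx' K1 K2 Hne; adj_lia.
have R2 : forall j, a i.+1 j = (j == y).
  apply: row_single; first by rewrite -Ez.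
  move=> w Hw; have K1 := HK Hx Hw; have K2 := HK Hx' Hw.
  clear -Kyx Kyx' K1 K2 Hne; adj_lia.
have L1 : i.-1 < i.+1 by lia.
have L2 : i.+1 <= N by lia.
by apply: (rows_eq_false L1 L2) => j; rewrite R1 R2.
Qed.

Hypothesis HN : 3 <= N.

Lemma walk p1 : a 1 p1 -> a 2 p1.+1 ->
  forall k, k + 3 <= N -> a (k + 1) (p1 + k) /\ a (k + 2) (p1 + k + 1).
Proof.
move=> H1 H2; elim=> [|k IH] Hk.
  by rewrite !add0n addn0 addn1; split.
case: (IH ltac:(lia)) => Ha Hb.
have E1 : k.+1 + 1 = k + 2 by lia.
have E2 : p1 + k.+1 = p1 + k + 1 by lia.
split; first by rewrite E1 E2.
case: (HR (i := k + 3) ltac:(lia)) => z Hz.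
have E : (k + 2).+1 = k + 3 by lia.
have Kz := HK Hb (eq_ind_r (fun t => a t z) Hz E).
have E3 : k.+1 + 2 = k + 3 by lia.
have E4 : p1 + k.+1 + 1 = p1 + k + 2 by lia.
rewrite E3 E4.
case/adjnP: Kz => Ez; first by have -> : p1 + k + 2 = z by lia.
exfalso.
have Ez' : z = p1 + k by lia.
have R1 : forall j, a (k + 1) j = (j == p1 + k).
  by apply: row_single => // w Hw; apply: (single (i := k + 1)) => //; lia.
have R2 : forall j, a (k + 3) j = (j == p1 + k).
  apply: row_single; first by rewrite -Ez'.
  by move=> w Hw; rewrite -Ez'; apply: (single (i := k + 3)) => //; lia.
have L1 : k + 1 < k + 3 by lia.
have L2 : k + 3 <= N by lia.
by apply: (rows_eq_false L1 L2) => j; rewrite R1 R2.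
Qed.
Lemma inc_case p1 : a 1 p1 -> a 2 p1.+1 ->
  exists c d, forall i j, i <= N -> j <= N -> a i j = sp N c d i j.
Proof.
move=> H1 H2.
have W : forall i, 1 <= i -> i < N -> forall j, a i j = (j == p1 + i - 1).
  move=> i Hi1 Hi2.
  have Hai : a i (p1 + i - 1).
    case: (leqP (i + 2) N) => Hi3.
      case: (walk H1 H2 (k := i - 1) ltac:(lia)) => Ha _.
      move: Ha; have -> : i - 1 + 1 = i by lia.
      by have -> : p1 + (i - 1) = p1 + i - 1 by lia.
    case: (walk H1 H2 (k := i - 2) ltac:(lia)) => _ Ha.
    move: Ha; have -> : i - 2 + 2 = i by lia.
    by have -> : p1 + (i - 2) + 1 = p1 + i - 1 by lia.
  by apply: row_single => // w Hw; apply: (single (i := i)).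
have HaN1 : a N.-1 (p1 + N - 2).
  by rewrite W; [apply/eqP; lia | lia | lia].
have Hp1 : p1 <= 2 by case: (HB HaN1) => _; lia.
have EN : N.-1.+1 = N by lia.
have classify : forall i j, a i j ->
   (i = 0 /\ (j.+1 = p1 \/ p1.+1 = j)) \/ (1 <= i < N /\ j = p1 + i - 1)
   \/ (i = N /\ ((p1 + N - 2).+1 = j \/ j.+1 = p1 + N - 2)).
  move=> i j Hij; case: (HB Hij) => Hi Hj.
  case: (posnP i) => [Ei | Hi0].
    by left; split => //; subst i; apply: adjnP; apply: HK Hij H1.
  case: (ltnP i N) => HiN.
    by right; left; split; [lia | apply/eqP; rewrite -W].
  right; right; split; first by lia.
  have Ei : i = N by lia.
  by apply: adjnP; apply: HK HaN1 _; rewrite EN -Ei.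
case: (HC (j := 0) ltac:(lia)) => i0 H0.
case: (HC (j := N) ltac:(lia)) => iN HN'.
have C0 := classify _ _ H0. have CN := classify _ _ HN'.
have Ep1 : p1 = 1 by lia.
have A00 : a 0 0.
  have Ei0 : i0 = 0 by lia.
  by rewrite Ei0 in H0.
have ANN : a N N.
  have EiN : iN = N by lia.
  by rewrite EiN in HN'.
subst p1.
exists (a 0 2), (a N (N - 2)) => i j Hi Hj.
apply/idP/idP => [Hij | ].
  rewrite /sp; case: (classify _ _ Hij) => [[Ei Hj']|[[Hi1 Ej]|[Ei Hj']]].
  - subst i; case: Hj' => Hj'.
      by apply/or3P; apply: Or31; apply/eqP; lia.
    by subst j; apply/or3P; apply: Or32; rewrite Hij.
  - by apply/or3P; apply: Or31; apply/eqP; lia.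
  - subst i; case: Hj' => Hj'.
      by apply/or3P; apply: Or31; apply/eqP; lia.
    have Ej : j = N - 2 by lia.
    by subst j; apply/or3P; apply: Or33; rewrite Hij !eqxx.
rewrite /sp; case/or3P => [/eqP Eij | /andP [/andP [Hc /eqP Ei] /eqP Ej] | /andP [/andP [Hd /eqP Ei] /eqP Ej]].
- subst j; case: (posnP i) => [-> // | Hi0].
  case: (ltnP i N) => HiN; first by rewrite W //; apply/eqP; lia.
  by have -> : i = N by lia.
- by subst i j.
- by subst i j.
Qed.

End Comb.

Section Comb2.
Variable N : nat.
Variable a : nat -> nat -> bool.
Hypothesis HB : forall i j, a i j -> i <= N /\ j <= N.
Hypothesis HK : forall i x y, a i x -> a i.+1 y -> adjn x y.
Hypothesis HR : forall i, i <= N -> exists j, a i j.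
Hypothesis HC : forall j, j <= N -> exists i, a i j.
Hypothesis HD : forall i i', i < i' -> i' <= N -> exists j, a i j != a i' j.

Lemma comb : 3 <= N -> exists r c d, forall i j, i <= N -> j <= N ->
  a i j = sp N c d i (if r then N - j else j).
Proof.
move=> HN.
case: (HR (i := 1) ltac:(lia)) => p1 H1.
case: (HR (i := 2) ltac:(lia)) => p2 H2.
case/adjnP: (HK H1 H2) => E.
  subst p2; case: (inc_case HB HK HR HC HD HN H1 H2) => c [d H].
  by exists false, c, d.
pose a' i j := (j <= N) && a i (N - j).
have HB' : forall i j, a' i j -> i <= N /\ j <= N.
  by move=> i j /andP [Hj /HB [Hi _]].
have HK' : forall i x y, a' i x -> a' i.+1 y -> adjn x y.
  move=> i x y /andP [Hx Hax] /andP [Hy Hay]; move: (HK Hax Hay) => K.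
  by case/adjnP: K => K; apply/orP; [right|left]; apply/eqP; lia.
have HR' : forall i, i <= N -> exists j, a' i j.
  move=> i Hi; case: (HR Hi) => j Hj; exists (N - j); rewrite /a'.
  by case: (HB Hj) => _ HjN; rewrite leq_subr subKn.
have HC' : forall j, j <= N -> exists i, a' i j.
  by move=> j Hj; case: (HC (j := N - j) ltac:(lia)) => i Hi; exists i; rewrite /a' Hj.
have HD' : forall i i', i < i' -> i' <= N -> exists j, a' i j != a' i' j.
  move=> i i' H1' H2'; case: (HD H1' H2') => j Hj.
  have HjN : j <= N.
    by move: Hj; case: (boolP (a i j)) => [/HB [] //|_]; case: (boolP (a i' j)) => [/HB [] //|].
  by exists (N - j); rewrite /a' leq_subr subKn.
have H1' : a' 1 (N - p1).
  by rewrite /a' leq_subr subKn //; case: (HB H1).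
have H2' : a' 2 (N - p1).+1.
  rewrite /a'; case: (HB H1) => _ Hp.
  have -> : N - (N - p1).+1 = p2 by lia.
  rewrite H2 andbT; lia.
have HN' : 3 <= N by [].
case: (inc_case HB' HK' HR' HC' HD' HN' H1' H2') => c [d H].
exists true, c, d => i j Hi Hj.
by rewrite -H ?leq_subr // /a' leq_subr subKn.
Qed.

Lemma comb3 : N = 2 ->
  [/\ forall j, j <= 2 -> a 1 j = (j == 1), ~~ a 0 1 && ~~ a 2 1,
      a 0 0 || a 0 2, a 2 0 || a 2 2 & (a 0 0 != a 2 0) || (a 0 2 != a 2 2)].
Proof.
move=> EN; subst N.
case: (HR (i := 1) ltac:(lia)) => p Hp.
have R0 : forall j, a 0 j -> adjn j p by move=> j Hj; apply: HK Hj Hp.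
have R2 : forall j, a 2 j -> adjn p j by move=> j Hj; apply: HK Hp Hj.
case: (HR (i := 0) ltac:(lia)) => y0 Hy0.
case: (HR (i := 2) ltac:(lia)) => y2 Hy2.
have Hp1 : p = 1.
  case: (HB Hp) => _ Hp2.
  case: (eqVneq p 1) => // /eqP Hne; exfalso.
  have K0 := adjnP (R0 _ Hy0). have K2 := adjnP (R2 _ Hy2).
  case: (HB Hy0) => _ By0. case: (HB Hy2) => _ By2.
  have Ey0 : y0 = 1 by lia.
  have Ey2 : y2 = 1 by lia.
  apply: (rows_eq_false HD (i := 0) (i' := 2)) => // j.
  apply/idP/idP => Hj.
    have := adjnP (R0 _ Hj) => ?; case: (HB Hj) => _ ?.
    by have -> : j = y2 by lia.
  have := adjnP (R2 _ Hj) => ?; case: (HB Hj) => _ ?.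
  by have -> : j = y0 by lia.
subst p.
have R0' : forall j, a 0 j -> j = 0 \/ j = 2 by move=> j /R0 /adjnP; lia.
have R2' : forall j, a 2 j -> j = 0 \/ j = 2 by move=> j /R2 /adjnP; lia.
have HR1 : forall j, j <= 2 -> a 1 j = (j == 1).
  move=> j Hj; apply/idP/idP => [Hj1 | /eqP -> //].
  have := HK Hy0 Hj1; case: (R0' _ Hy0) => -> /adjnP; lia.
split => //.
- by apply/andP; split; apply/negP; [move/R0' | move/R2']; lia.
- by case: (R0' _ Hy0) => E; subst y0; rewrite Hy0 ?orbT.
- by case: (R2' _ Hy2) => E; subst y2; rewrite Hy2 ?orbT.
case: (HD (i := 0) (i' := 2) ltac:(lia) ltac:(lia)) => j Hj.
have Hj02 : j = 0 \/ j = 2.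
  move: Hj; case: (boolP (a 0 j)) => [/R0' // | _]; case: (boolP (a 2 j)) => [/R2' // | //].
by case: Hj02 => E; subst j; rewrite Hj ?orbT.
Qed.

End Comb2.

Local Open Scope ring_scope.
Lemma f2_cases (x : 'F_2) : x = 0 \/ x = 1.
Proof. case: x => [[|[|k]] Hk]; [left|right|by []]; exact: val_inj. Qed.
Lemma f2_11 : (1 + 1 : 'F_2) = 0. Proof. by apply: val_inj. Qed.
Lemma f2_10 : (1 : 'F_2) != 0. Proof. by []. Qed.
Lemma f2_nat (b : bool) : (((b%:R : 'F_2) == 1) = b).
Proof. by case: b. Qed.
Lemma f2_neq1 (x : 'F_2) : (x != 1) -> x = 0.
Proof. by case: (f2_cases x) => ->; rewrite ?eqxx. Qed.
Lemma f2_neq0 (x : 'F_2) : (x != 0) -> x = 1.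
Proof. by case: (f2_cases x) => ->; rewrite ?eqxx. Qed.
Lemma f2_eqb (x : 'F_2) : x = (x == 1)%:R.
Proof. by case: (f2_cases x) => ->. Qed.
Lemma f2_sum1 (b1 b2 : bool) : ((b1%:R + b2%:R : 'F_2) == 1) -> b1 || b2.
Proof. by case: b1; case: b2. Qed.

Section Gen.
Variable m : nat.
Implicit Types A B : 'M['F_2]_m.

Lemma sum_nz (f : 'I_m -> 'F_2) : \sum_k f k != 0 -> exists k, f k != 0.
Proof.
move=> H; apply/existsP; apply: contraR H => /existsPn H.
by apply/eqP; apply: big1 => k _; apply/eqP; move: (H k); rewrite negbK.
Qed.

Lemma fibP (v : 'cV['F_2]_m) :
  (forall i j : 'I_m, nat_of_ord j = (nat_of_ord i).+1 -> v i 0 = 1 -> v j 0 = 1 -> False) ->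
  fib_vec v.
Proof.
move=> H; apply/forallP => i; apply/forallP => j; apply/implyP => /eqP Hj.
apply/negP => /andP [/eqP Hi /eqP Hj']; exact: (H i j Hj Hi Hj').
Qed.

Lemma fibE (v : 'cV['F_2]_m) i j : fib_vec v -> nat_of_ord j = (nat_of_ord i).+1 ->
   v i 0 = 1 -> v j 0 = 1 -> False.
Proof.
move=> /forallP /(_ i) /forallP /(_ j) /implyP H Hj Hi Hj'.
by move: (H (introT eqP Hj)); rewrite Hi Hj' eqxx.
Qed.

Lemma delta_entry (k i : 'I_m) : (delta_mx k 0 : 'cV['F_2]_m) i 0 = (i == k)%:R.
Proof. by rewrite mxE eqxx andbT. Qed.

Lemma fib_delta (k : 'I_m) : fib_vec (delta_mx k 0 : 'cV['F_2]_m).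
Proof.
apply: fibP => i j Hj; rewrite !delta_entry => /eqP Hi /eqP Hj'.
move: Hi Hj'; rewrite !f2_nat => /eqP Hi /eqP Hk; move: Hj; rewrite Hk Hi; lia.
Qed.

Lemma fib_delta2 (k l : 'I_m) : ((k.+1 < l) || (l.+1 < k))%N ->
  fib_vec (delta_mx k 0 + delta_mx l 0 : 'cV['F_2]_m).
Proof.
move=> Hkl; apply: fibP => i j Hj; rewrite !mxE !eqxx !andbT.
move/eqP/f2_sum1 => Hi /eqP/f2_sum1 Hj2.
move: Hi Hj2 Hkl Hj; rewrite -!val_eqE /=; lia.
Qed.

Lemma mul_delta_entry A (k i : 'I_m) : (A *m (delta_mx k 0 : 'cV['F_2]_m)) i 0 = A i k.
Proof. by rewrite -colE mxE. Qed.


Lemma good_adj A : Fgood A -> forall i j x y : 'I_m,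
  nat_of_ord j = (nat_of_ord i).+1 -> A i x = 1 -> A j y = 1 -> adjn x y.
Proof.
move=> /andP [_ /forallP HA] i j x y Hj Hx Hy.
have P1 : forall z, A i z = 1 -> A j z = 1 -> False.
  move=> z H1 H2; move/implyP: (HA (delta_mx z 0)) => /(_ (fib_delta z)) Hf.
  by apply: (fibE Hf Hj); rewrite mul_delta_entry.
case: (boolP (x == y)) => [/eqP Exy | nxy].
  by exfalso; apply: (P1 x Hx); rewrite Exy.
apply/negPn/negP => Hn.
have Hkl : ((x.+1 < y) || (y.+1 < x))%N.
  move: nxy Hn; rewrite /adjn -val_eqE /=; lia.
move/implyP: (HA (delta_mx x 0 + delta_mx y 0)) => /(_ (fib_delta2 Hkl)) Hf.
have Hiy : A i y = 0 by apply: f2_neq1; apply/negP => /eqP H; exact: P1 H Hy.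
have Hjx : A j x = 0 by apply: f2_neq1; apply/negP => /eqP H; exact: P1 Hx H.
apply: (fibE Hf Hj); rewrite mulmxDr mxE !mul_delta_entry.
  by rewrite Hx Hiy addr0.
by rewrite Hy Hjx add0r.
Qed.

Lemma adj_good A : A \in unitmx -> (forall i j x y : 'I_m,
  nat_of_ord j = (nat_of_ord i).+1 -> A i x = 1 -> A j y = 1 -> adjn x y) -> Fgood A.
Proof.
move=> HU Hadj; apply/andP; split => //; apply/forallP => v; apply/implyP => Hv.
have ext : forall i, (A *m v) i 0 = 1 -> exists k, A i k = 1 /\ v k 0 = 1.
  move=> i; rewrite mxE => H.
  have [k Hk] : exists k, A i k * v k 0 != 0 by apply: sum_nz; rewrite H.
  exists k; move: Hk; rewrite mulf_eq0 negb_or => /andP [H1 H2].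
  by split; apply: f2_neq0.
apply: fibP => i j Hj /ext [x [Hx Hvx]] /ext [y [Hy Hvy]].
move: (Hadj i j x y Hj Hx Hy); rewrite /adjn; case/orP => /eqP E.
  by apply: (fibE Hv (esym E)).
by apply: (fibE Hv (esym E)).
Qed.

Lemma good_mul A B : Fgood A -> Fgood B -> Fgood (A *m B).
Proof.
move=> /andP [HA /forallP FA] /andP [HB /forallP FB]; apply/andP; split.
  by rewrite unitmx_mul HA HB.
apply/forallP => v; apply/implyP => Hv; rewrite -mulmxA.
by move/implyP: (FA (B *m v)); apply; move/implyP: (FB v); apply.
Qed.

Lemma good1 : Fgood (1%:M : 'M['F_2]_m).
Proof.
apply/andP; split; first exact: unitmx1.
by apply/forallP => v; rewrite mul1mx; apply/implyP.
Qed.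

End Gen.

End Dev1.
Import Dev1.

Module Dev2.
Set Implicit Arguments. Unset Strict Implicit. Unset Printing Implicit Defensive.
Local Open Scope ring_scope.

Section Bridge.
Variable n : nat.
Implicit Types A : 'M['F_2]_n.+1.

Definition an A (i j : nat) : bool := [exists i' : 'I_n.+1, exists j' : 'I_n.+1,
   [&& nat_of_ord i' == i, nat_of_ord j' == j & A i' j' == 1]].

Lemma anE A (i j : 'I_n.+1) : an A i j = (A i j == 1).
Proof.
apply/existsP/idP => [[i' /existsP [j' /and3P [/eqP Ei /eqP Ej H]]] | H].
  have Ei' : i' = i by apply: val_inj.
  have Ej' : j' = j by apply: val_inj.
  by rewrite -Ei' -Ej'.
by exists i; apply/existsP; exists j; rewrite !eqxx H.
Qed.

Lemma anB A i j : an A i j -> (i <= n)%N /\ (j <= n)%N.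
Proof.
case/existsP => i' /existsP [j' /and3P [/eqP <- /eqP <- _]].
by split; rewrite -ltnS ltn_ord.
Qed.

Lemma an_ord A i : (i <= n)%N -> exists i' : 'I_n.+1, nat_of_ord i' = i.
Proof. by move=> Hi; exists (inord i); rewrite inordK. Qed.

Lemma an_HK A : Fgood A -> forall i x y, an A i x -> an A i.+1 y -> adjn x y.
Proof.
move=> HA i x y /existsP [i' /existsP [x' /and3P [/eqP Ei /eqP Ex Hx]]].
move=> /existsP [j' /existsP [y' /and3P [/eqP Ej /eqP Ey Hy]]].
rewrite -Ex -Ey; apply: (good_adj HA (i := i') (j := j')); first by rewrite Ej Ei.
  exact/eqP.
exact/eqP.
Qed.

Lemma an_HR A : A \in unitmx -> forall i, (i <= n)%N -> exists j, an A i j.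
Proof.
move=> HU i Hi; case: (an_ord A Hi) => i' <-.
have H := mulmxV HU; move/matrixP: H => /(_ i' i'); rewrite !mxE eqxx => H.
have [k Hk] : exists k, A i' k * invmx A k i' != 0 by apply: sum_nz; rewrite H.
exists k; rewrite anE; move: Hk; rewrite mulf_eq0 negb_or => /andP [H1 _].
by rewrite (f2_neq0 H1).
Qed.

Lemma an_HC A : A \in unitmx -> forall j, (j <= n)%N -> exists i, an A i j.
Proof.
move=> HU j Hj; case: (an_ord A Hj) => j' <-.
have H := mulVmx HU; move/matrixP: H => /(_ j' j'); rewrite !mxE eqxx => H.
have [k Hk] : exists k, invmx A j' k * A k j' != 0 by apply: sum_nz; rewrite H.
exists k; rewrite anE; move: Hk; rewrite mulf_eq0 negb_or => /andP [_ H1].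
by rewrite (f2_neq0 H1).
Qed.

Lemma an_HD A : A \in unitmx -> forall i i', (i < i')%N -> (i' <= n)%N ->
  exists j, an A i j != an A i' j.
Proof.
move=> HU i i' Hii' Hi'.
case: (an_ord A Hi') => I' EI'.
case: (an_ord A (ltnW (leq_trans Hii' Hi'))) => I EI.
case: (boolP [exists j : 'I_n.+1, an A i j != an A i' j]) => [/existsP [j Hj] | /existsPn H].
  by exists j.
exfalso.
have Hrow : forall k, A I k = A I' k.
  move=> k; rewrite (f2_eqb (A I k)) (f2_eqb (A I' k)) -!anE.
  by move: (H k); rewrite negbK -EI -EI' => /eqP ->.
have HM := mulmxV HU; move/matrixP: (HM) => /(_ I I'); rewrite !mxE.
have -> : (I == I') = false by apply/negbTE; rewrite -val_eqE /= EI EI' neq_ltn Hii'.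
under eq_bigr => k _ do rewrite Hrow.
move/matrixP: HM => /(_ I' I'); rewrite !mxE eqxx => ->.
by move/eqP; rewrite mulr1n mulr0n oner_eq0.
Qed.

End Bridge.

Lemma f2_xx (x : 'F_2) : x + x = 0.
Proof. by case: (f2_cases x) => ->; rewrite ?addr0 ?f2_11. Qed.

Lemma f2_comb (b1 b2 b3 c d : bool) : ~~ (b1 && b2) -> ~~ (b1 && b3) -> ~~ (b2 && b3) ->
  ((1 : 'F_2) *+ b1 + c%:R * b2%:R + d%:R * b3%:R) = ([|| b1, c && b2 | d && b3])%:R.
Proof. by case: b1; case: b2; case: b3; case: c; case: d => //= _ _ _; apply: val_inj. Qed.

Lemma adjnI x y : (x.+1 = y \/ y.+1 = x) -> adjn x y.
Proof. by case => E; apply/orP; [left|right]; apply/eqP. Qed.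

Lemma sp_adj N c d i x y : (2 <= N)%N -> (i.+1 <= N)%N -> sp N c d i x -> sp N c d i.+1 y -> adjn x y.
Proof.
move=> H2 Hi; rewrite /sp.
case/or3P => [/eqP E1 | /andP [/andP [_ /eqP E1] /eqP E2] | /andP [/andP [_ /eqP E1] /eqP E2]];
case/or3P => [/eqP F1 | /andP [/andP [_ /eqP F1] /eqP F2] | /andP [/andP [_ /eqP F1] /eqP F2]];
apply: adjnI; lia.
Qed.

Section Mats.
Variable n : nat.
Hypothesis Hn : (2 <= n)%N.

Definition Emx (c d : bool) : 'M['F_2]_n.+1 :=
  1%:M + (c%:R : 'F_2) *: delta_mx 0 (inord 2) + (d%:R : 'F_2) *: delta_mx ord_max (inord (n - 2)).

Lemma EmxE c d (i j : 'I_n.+1) : Emx c d i j = (sp n c d i j)%:R.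
Proof.
rewrite !mxE -!val_eqE /= !inordK; try lia.
rewrite f2_comb /sp ?andbA //; apply/negP; lia.
Qed.

Definition Jmx : 'M['F_2]_n.+1 := \matrix_(i, j) ((nat_of_ord i + nat_of_ord j == n)%N)%:R.

Lemma mulJ (A : 'M['F_2]_n.+1) i j : (A *m Jmx) i j = A i (rev_ord j).
Proof.
rewrite mxE (bigD1 (rev_ord j)) //= big1 ?addr0.
  by rewrite mxE /= (_ : (n.+1 - j.+1 + j == n)%N = true) ?mulr1 //; apply/eqP; have := ltn_ord j; lia.
move=> k Hk; rewrite mxE; case: eqP => [E|]; last by rewrite mulr0.
by move: Hk E; rewrite -val_eqE /=; have := ltn_ord j; have := ltn_ord k; lia.
Qed.

Lemma Jmul (A : 'M['F_2]_n.+1) i j : (Jmx *m A) i j = A (rev_ord i) j.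
Proof.
rewrite mxE (bigD1 (rev_ord i)) //= big1 ?addr0.
  by rewrite mxE /= (_ : (i + (n.+1 - i.+1) == n)%N = true) ?mul1r //; apply/eqP; have := ltn_ord i; lia.
move=> k Hk; rewrite mxE; case: eqP => [E|]; last by rewrite mul0r.
by move: Hk E; rewrite -val_eqE /=; have := ltn_ord j; have := ltn_ord k; lia.
Qed.

Lemma JJ : Jmx *m Jmx = 1%:M.
Proof.
apply/matrixP => i j; rewrite mulJ !mxE /=.
have Hj : (j <= n)%N by rewrite -ltnS ltn_ord.
have Hi : (i <= n)%N by rewrite -ltnS ltn_ord.
suff -> : (i + (n.+1 - j.+1) == n)%N = (i == j) by [].
apply/eqP/eqP => E; first by apply: val_inj => /=; move: E; lia.
by rewrite E; lia.
Qed.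

Lemma mx_xx (M : 'M['F_2]_n.+1) : M + M = 0.
Proof. by apply/matrixP => i j; rewrite !mxE f2_xx. Qed.

Lemma EE c d : ((3 <= n)%N || ~~ d) -> Emx c d *m Emx c d = 1%:M.
Proof.
move=> H; rewrite /Emx !mulmxDl !mulmxDr !mul1mx !mulmx1.
rewrite -!scalemxAl -!scalemxAr !mul_delta_mx_cond.
have E1 : ((inord 2 : 'I_n.+1) == 0) = false by rewrite -val_eqE /= inordK //; lia.
have E2 : ((inord 2 : 'I_n.+1) == ord_max) = (n == 2)%N by rewrite -val_eqE /= inordK //; lia.
have E3 : ((inord (n - 2) : 'I_n.+1) == ord_max) = false by rewrite -val_eqE /= inordK //; lia.
rewrite E1 E3 E2 !mulr0n !scaler0 !addr0.
case/orP: H => H.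
  have E4 : ((inord (n - 2) : 'I_n.+1) == 0) = false by rewrite -val_eqE /= inordK //; lia.
  have E5 : (n == 2)%N = false by lia.
  rewrite E4 E5 !mulr0n !scaler0 !addr0.
  set X := _ *: delta_mx _ _; set Y := _ *: delta_mx _ _.
  by rewrite -!addrA (addrCA Y) mx_xx addr0 mx_xx addr0.
rewrite (negbTE H) !scale0r !scaler0 !addr0.
set X := _ *: delta_mx _ _.
by rewrite -addrA mx_xx addr0.
Qed.

Lemma f2_nat1 (b : bool) : ((b%:R : 'F_2) = 1) -> b.
Proof. by move/eqP; rewrite f2_nat. Qed.

Lemma Emx_good c d : ((3 <= n)%N || ~~ d) -> Fgood (Emx c d).
Proof.
move=> H; apply: adj_good; first by case: (mulmx1_unit (EE c H)).
move=> i j x y Hj; rewrite !EmxE => /f2_nat1 Hx /f2_nat1 Hy.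
apply: (sp_adj (N := n) (i := i) Hn _ Hx); first by rewrite -Hj -ltnS ltn_ord.
by rewrite -Hj.
Qed.

Lemma J_good : Fgood Jmx.
Proof.
apply: adj_good; first by case: (mulmx1_unit JJ).
move=> i j x y Hj; rewrite !mxE => /f2_nat1 /eqP Hx /f2_nat1 /eqP Hy.
by apply: adjnI; lia.
Qed.

Definition Mat (r c d : bool) : 'M['F_2]_n.+1 := if r then Emx c d *m Jmx else Emx c d.

Lemma MatE r c d (i j : 'I_n.+1) :
  Mat r c d i j = (sp n c d i (if r then (n - j)%N else j))%:R.
Proof.
by case: r; rewrite /Mat ?mulJ EmxE //=.
Qed.

Lemma Mat_good r c d : (3 <= n)%N -> Fgood (Mat r c d).
Proof.
move=> H3; have HE : Fgood (Emx c d) by apply: Emx_good; apply/orP; left.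
case: r; rewrite /Mat; [apply: good_mul; [exact: HE | exact: J_good] | exact: HE].
Qed.

End Mats.

Lemma good_char n (H3 : (3 <= n)%N) (A : 'M['F_2]_n.+1) :
  Fgood A -> exists r c d, A = Mat n r c d.
Proof.
move=> HA; have HU : A \in unitmx by case/andP: HA.
have [r [c [d H]]] := comb (@anB n A) (an_HK HA) (an_HR HU) (an_HC HU) (an_HD HU) H3.
exists r, c, d; apply/matrixP => i j.
have Hn2 : (2 <= n)%N by lia.
rewrite (MatE Hn2) (f2_eqb (A i j)) -anE H //; try by rewrite -ltnS ltn_ord.
Qed.

Lemma sp_inj N r c d r' c' d' : (3 <= N)%N ->
  (forall i j, (i <= N)%N -> (j <= N)%N ->
     sp N c d i (if r then N - j else j)%N = sp N c' d' i (if r' then N - j else j)%N) ->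
  (r, c, d) = (r', c', d').
Proof.
move=> HN H.
have E1 : (0 == N)%N = false by apply/negbTE/eqP; lia.
have E2 : (N == 2)%N = false by apply/negbTE/eqP; lia.
have E3 : (N == 0)%N = false by apply/negbTE/eqP; lia.
have E4 : (N == N - 2)%N = false by apply/negbTE/eqP; lia.
have E5 : (N - (N - 2))%N = 2 by lia.
have HN0 : (0 <= N)%N by [].
have HN2 : (N - 2 <= N)%N by lia.
have H2N : (2 <= N)%N by lia.
have Hr : r = r'.
  move: (H 0%N 0%N HN0 HN0); rewrite subn0 /sp.
  by destruct r, r' => //=; rewrite ?E1 ?E2 ?E3 /= ?andbF.
subst r'.
have Hc : c = c'.
  move: (H 0%N (if r then N - 2 else 2)%N HN0 ltac:(destruct r => //)).
  by destruct r; rewrite ?E5 /sp /= E1 /= !andbT !andbF !orbF.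
have Hd : d = d'.
  move: (H N (if r then 2 else N - 2)%N (leqnn N) ltac:(destruct r => //)).
  by destruct r; rewrite ?E5 /sp /= E4 E3 /= !eqxx !andbT !andbF.
by rewrite Hc Hd.
Qed.

Lemma f2_nat_inj (b b' : bool) : ((b%:R : 'F_2) = b'%:R) -> b = b'.
Proof. by case: b; case: b' => // /eqP; rewrite ?mulr1n ?mulr0n ?oner_eq0 // eq_sym oner_eq0. Qed.

Lemma Mat_inj n (H3 : (3 <= n)%N) :
  injective (fun p : bool * bool * bool => Mat n p.1.1 p.1.2 p.2).
Proof.
move=> [[r c] d] [[r' c'] d'] /= E; apply: (sp_inj H3) => i j Hi Hj.
have Hn2 : (2 <= n)%N by lia.
have := congr1 (fun M : 'M['F_2]_n.+1 => M (inord i) (inord j)) E.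
by rewrite /= !(MatE Hn2) !inordK //; move/f2_nat_inj.
Qed.

Lemma good_set8 n (H3 : (3 <= n)%N) :
  [set A : 'M['F_2]_n.+1 | Fgood A] =
  (fun p : bool * bool * bool => Mat n p.1.1 p.1.2 p.2) @: [set: bool * bool * bool].
Proof.
apply/setP => A; rewrite inE; apply/idP/imsetP.
  by move/(good_char H3) => [r [c [d ->]]]; exists (r, c, d); rewrite ?inE.
case => p _ ->; apply: Mat_good; lia.
Qed.

Lemma card8 n (H3 : (3 <= n)%N) : #|[set A : 'M['F_2]_n.+1 | Fgood A]| = 8%N.
Proof.
rewrite good_set8 // card_imset; last exact: Mat_inj.
by rewrite cardsT !card_prod card_bool.
Qed.

Definition sp3 (u0 u2 v0 v2 : bool) (i j : nat) : bool :=
  if (i == 1)%N then (j == 1)%N else if (i == 0)%N then ((j == 0)%N && u0) || ((j == 2)%N && u2)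
  else ((j == 0)%N && v0) || ((j == 2)%N && v2).

Definition Mat3 u0 u2 v0 v2 : 'M['F_2]_3 := \matrix_(i, j) (sp3 u0 u2 v0 v2 i j)%:R.

Definition tab (k : 'I_6) : bool * bool * bool * bool :=
  match nat_of_ord k with
  | 0 => (true, true, true, false)
  | 1 => (true, true, false, true)
  | 2 => (true, false, true, true)
  | 3 => (true, false, false, true)
  | 4 => (false, true, true, true)
  | _ => (false, true, true, false)
  end.

Definition Mat3t (k : 'I_6) := let: (u0, u2, v0, v2) := tab k in Mat3 u0 u2 v0 v2.

Lemma tab_surj (u0 u2 v0 v2 : bool) : u0 || u2 -> v0 || v2 -> (u0 != v0) || (u2 != v2) ->
  exists k : 'I_6, tab k = (u0, u2, v0, v2).
Proof.
case: u0; case: u2; case: v0; case: v2 => //= _ _ _;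
[ exists (@Ordinal 6 0 isT) | exists (@Ordinal 6 1 isT) | exists (@Ordinal 6 2 isT)
| exists (@Ordinal 6 3 isT) | exists (@Ordinal 6 4 isT) | exists (@Ordinal 6 5 isT)]; by [].
Qed.

Lemma good3_char (A : 'M['F_2]_3) : Fgood A -> exists k : 'I_6, A = Mat3t k.
Proof.
move=> HA; have HU : A \in unitmx by case/andP: HA.
have [F1 F2 F3 F4 F5] := comb3 (@anB 2 A) (an_HK HA) (an_HR HU) (an_HC HU) (an_HD HU) (erefl 2%N).
have EA : A = Mat3 (an A 0 0) (an A 0 2) (an A 2 0) (an A 2 2).
  apply/matrixP => i j; rewrite mxE (f2_eqb (A i j)) -anE; congr (_ %:R).
  case/andP: F2 => F21 F22.
  case: i => [[|[|[|i]]] Hi] //; case: j => [[|[|[|j]]] Hj] //; rewrite /sp3 /= ?orbF //;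
    by rewrite ?F1 ?(negbTE F21) ?(negbTE F22).
have [k Hk] := tab_surj F3 F4 F5.
by exists k; rewrite /Mat3t Hk.
Qed.

Lemma card6_le : (#|[set A : 'M['F_2]_3 | Fgood A]| <= 6)%N.
Proof.
apply: (leq_trans (subset_leq_card (B := Mat3t @: [set: 'I_6]) _)).
  apply/subsetP => A; rewrite inE => /good3_char [k ->]; apply/imsetP; exists k; by rewrite ?inE.
by rewrite (leq_trans (leq_imset_card _ _)) // cardsT card_ord.
Qed.

End Dev2.
Import Dev2.

Module Dev3.
Set Implicit Arguments. Unset Strict Implicit. Unset Printing Implicit Defensive.
Local Open Scope group_scope.
Set Implicit Arguments. Unset Strict Implicit. Unset Printing Implicit Defensive.

Lemma dih_gen (gT : finGroupType) (G : {group gT}) (x y : gT) :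
  x \in G -> y \in G -> #[x] = 2 -> #[y] = 2 -> (x * y != y * x)%g ->
  (#|G| = 8 \/ #|G| <= 6) -> G :=: <<[set x; y]>> /\ (#|G| = 8 \/ #|G| = 6).
Proof.
move=> xG yG Ox Oy nc HG.
set K := <<[set x; y]>>.
have xK : x \in K by apply: mem_gen; rewrite !inE eqxx.
have yK : y \in K by apply: mem_gen; rewrite !inE eqxx orbT.
have sKG : K \subset G.
  by rewrite gen_subG; apply/subsetP => z; rewrite !inE => /orP [/eqP -> | /eqP ->].
have nab : ~~ abelian K.
  apply/negP => /centsP Hab; move: (Hab x xK y yK) => E.
  by move: nc; rewrite E eqxx.
have ev : 2 %| #|K| by rewrite -{1}Ox orderE cardSg // cycle_subG.
have n2 : #|K| != 2.
  apply/eqP => E; move: nab; rewrite cyclic_abelian //; apply: prime_cyclic; by rewrite E.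
have n4 : #|K| != 4.
  by apply/eqP => E; move: nab; rewrite (card_p2group_abelian (p := 2)) // E.
have dvd : #|K| %| #|G| by apply: cardSg.
have Kpos : 0 < #|K| by apply: cardG_gt0.
have KG : #|G| <= #|K| -> K :=: G.
  by move=> H; apply/eqP; rewrite eqEcard sKG H.
case: HG => [H8 | H6].
  have Hk8 : #|K| = 8.
    move: dvd; rewrite H8 => dvd.
    have Hk : #|K| <= 8 by apply: dvdn_leq.
    move: Hk ev n2 n4 Kpos dvd; move: #|K| => k.
    by do 9 (case: k => [|k] //).
  by rewrite KG; [split => //; left | rewrite Hk8 H8].
have Hk6 : #|K| = 6.
  have Hk : #|K| <= 6 by apply: leq_trans H6; apply: subset_leq_card.
  move: Hk ev n2 n4 Kpos; move: #|K| => k.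
  by do 7 (case: k => [|k] //).
have HG6 : #|G| = 6 by apply/eqP; rewrite eqn_leq H6 -Hk6 subset_leq_card.
by rewrite KG; [split => //; right | rewrite Hk6 HG6].
Qed.

Section GLpart.
Variable n : nat.
Hypothesis Hn : 2 <= n.
Local Notation GLn := {'GL_n.+1['F_2]}.
Local Open Scope ring_scope.

Definition Hset := [set g : GLn | Fgood (GLval g)].

Lemma Hgroup : group_set Hset.
Proof.
apply/group_setP; split; first by rewrite inE GL_1E; exact: good1.
move=> u v; rewrite !inE GL_MxE; exact: good_mul.
Qed.

Lemma card_H : #|Hset| = #|[set A : 'M['F_2]_n.+1 | Fgood A]|.
Proof.
have inj : injective (fun u : GLn => GLval u) by move=> u v E; apply: val_inj.
rewrite (_ : [set A : 'M['F_2]_n.+1 | Fgood A] = (fun u : GLn => GLval u) @: Hset).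
  by rewrite card_imset.
apply/setP => A; rewrite inE.
apply/idP/imsetP => [HA | [u]]; last by rewrite inE => Hu ->.
have HU : A \in unitmx by case/andP: HA.
by exists (@FinRing.Unit _ A HU); rewrite ?inE.
Qed.

Definition mkGL (A : 'M['F_2]_n.+1) (H : A \in unitmx) : GLn := @FinRing.Unit _ A H.

Lemma JU : Jmx n \in unitmx. Proof. by case: (mulmx1_unit (JJ Hn)). Qed.
Lemma TU : Emx n true false \in unitmx.
Proof. by case: (mulmx1_unit (EE Hn true (d := false) (orbT _))). Qed.

Definition xJ := mkGL JU.
Definition yT := mkGL TU.

Lemma xJ_in : xJ \in Hset. Proof. rewrite inE; exact: J_good. Qed.
Lemma yT_in : yT \in Hset. Proof. rewrite inE; apply: Emx_good => //; exact: orbT. Qed.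

Lemma ord2 (u : GLn) : GLval u *m GLval u = 1%:M -> GLval u != 1%:M -> #[u] = 2.
Proof.
move=> H1 H2; apply: nt_prime_order => //.
  by apply: val_inj; rewrite expgS expg1; change (GLval (u * u)%g = GLval 1%g); rewrite GL_MxE H1.
Qed.

Lemma xJ_ord : #[xJ] = 2.
Proof.
apply: ord2; first exact: (JJ Hn).
apply/eqP => /matrixP /(_ 0 0); rewrite !mxE /= => /eqP.
have -> : (0 + 0 == n) = false by apply/negbTE/eqP; lia.
by rewrite mulr0n mulr1n eq_sym oner_eq0.
Qed.

Lemma yT_ord : #[yT] = 2.
Proof.
apply: ord2; first exact: (EE Hn true (d := false) (orbT _)).
apply/eqP => /matrixP /(_ 0 (inord 2)); rewrite (EmxE Hn) !mxE /= /sp.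
rewrite -val_eqE /= inordK; last by lia.
by move/eqP; rewrite /= mulr0n mulr1n oner_eq0.
Qed.

Lemma xy_nc : (xJ * yT != yT * xJ)%g.
Proof.
apply/eqP => /(congr1 (fun u : GLn => GLval u)); rewrite !GL_MxE /xJ /yT /mkGL /=.
move/matrixP => /(_ 0 (inord (n - 2))); rewrite (mulJ Hn) (Jmul Hn) !(EmxE Hn) /sp /=.
rewrite inordK; last by lia.
have -> : (n.+1 - 1 == n - 2)%N = false by apply/negbTE/eqP; lia.
have -> : (n.+1 - 1 == 0)%N = false by apply/negbTE/eqP; lia.
have -> : (n.+1 - (n - 2).+1 == 2)%N = true by apply/eqP; lia.
by rewrite orbT /= => /eqP; rewrite mulr0n mulr1n eq_sym oner_eq0.
Qed.

End GLpart.

Section S3.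
Let o0 := @Ordinal 3 0 isT.
Let o1 := @Ordinal 3 1 isT.
Let o2 := @Ordinal 3 2 isT.
Definition s1 : 'S_3 := tperm o0 o1.
Definition s2 : 'S_3 := tperm o1 o2.

Lemma s_ord (a b : 'I_3) : a != b -> #[tperm a b] = 2.
Proof.
move=> Hab; apply: nt_prime_order => //; first by rewrite expgS expg1 tperm2.
apply/eqP => /permP /(_ a); rewrite tpermL perm1 => E.
by move: Hab; rewrite E eqxx.
Qed.

Lemma s_nc : s1 * s2 != s2 * s1.
Proof.
apply/eqP => /permP /(_ o0); rewrite !permM /s1 /s2 tpermL.
rewrite (tpermD (x := o1) (y := o2) (z := o0)) // !tpermL => E.
by move: E => /(congr1 val).
Qed.

Lemma S3_isog : [set: 'S_3] \isog 'D_6.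
Proof.
have s1G : s1 \in [set: 'S_3]%G by rewrite inE.
have s2G : s2 \in [set: 'S_3]%G by rewrite inE.
have O1 : #[s1] = 2 by apply: s_ord.
have O2 : #[s2] = 2 by apply: s_ord.
have cardS : #|[set: 'S_3]%G| <= 6 by rewrite /= cardsT card_Sn.
have [KG [H8 | H6]] := dih_gen s1G s2G O1 O2 s_nc (or_intror cardS).
  by move: cardS; rewrite H8.
have ne : s1 != s2 by apply: contra s_nc => /eqP ->.
have := involutions_gen_dihedral O1 O2 ne; rewrite /= -KG.
by rewrite H6.
Qed.
End S3.

Lemma part_n (n : nat) : 3 <= n ->
     #|[set A : 'M['F_2]_n.+1 | Fgood A]| = 8 /\
     group_set [set g : {'GL_n.+1['F_2]} | Fgood (GLval g)] /\
     ([set g : {'GL_n.+1['F_2]} | Fgood (GLval g)] \isog 'D_8).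
Proof.
move=> H3; have Hn : 2 <= n by lia.
have C8 := card8 H3.
split => //; split; first exact: (Hgroup n).
pose G := Group (Hgroup n).
have cG : #|G| = 8 by rewrite /= card_H.
have [KG [H8 | H6]] := dih_gen (G := G) (xJ_in Hn) (yT_in Hn) (xJ_ord Hn) (yT_ord Hn) (xy_nc Hn) (or_introl cG).
  have ne : xJ Hn != yT Hn by apply: contra (xy_nc Hn) => /eqP ->.
  have := involutions_gen_dihedral (xJ_ord Hn) (yT_ord Hn) ne.
  by rewrite /= -KG H8.
by move: H6; rewrite cG.
Qed.

Lemma part_3 :
  #|[set A : 'M['F_2]_3 | Fgood A]| = 6 /\
   group_set [set g : {'GL_3['F_2]} | Fgood (GLval g)] /\
   ([set g : {'GL_3['F_2]} | Fgood (GLval g)] \isog [set: 'S_3]).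
Proof.
have Hn : 2 <= 2 by [].
pose G := Group (Hgroup 2).
have cG : #|G| <= 6 by rewrite /= (card_H 2); exact: card6_le.
have [KG [H8 | H6]] := dih_gen (G := G) (xJ_in Hn) (yT_in Hn) (xJ_ord Hn) (yT_ord Hn) (xy_nc Hn) (or_intror cG).
  by move: cG; rewrite H8.
split; first by rewrite -(card_H 2); exact: H6.
split; first exact: (Hgroup 2).
have ne : xJ Hn != yT Hn by apply: contra (xy_nc Hn) => /eqP ->.
have := involutions_gen_dihedral (xJ_ord Hn) (yT_ord Hn) ne.
rewrite /= -KG H6 => HD.
apply: (isog_trans HD); rewrite isog_sym; exact: S3_isog.
Qed.

End Dev3.
Import Dev3.

(* Dimension n.+1 with n >= 3, i.e. dimension >= 4 ('GL needs a successor dim).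
   'D_8 is MathComp's dihedral group of order 8 (the paper's D_4). *)
Theorem theorem1 :
  (forall n : nat, (3 <= n)%N ->
     #|[set A : 'M['F_2]_n.+1 | Fgood A]| = 8%N /\
     group_set [set g : {'GL_n.+1['F_2]} | Fgood (GLval g)] /\
     ([set g : {'GL_n.+1['F_2]} | Fgood (GLval g)] \isog 'D_8)%g)
  /\
  (#|[set A : 'M['F_2]_3 | Fgood A]| = 6%N /\
   group_set [set g : {'GL_3['F_2]} | Fgood (GLval g)] /\
   ([set g : {'GL_3['F_2]} | Fgood (GLval g)] \isog [set: 'S_3])%g).
Proof.
split; [exact: part_n | exact: part_3].
Qed.
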